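(* Let $\alpha=(\alpha_1,\dots,\alpha_t)\in\mathcal{P}(n)$ with $\delta(\alpha)=\big(1,2,\dots,q,q^{(s_q)},(q-1)^{(s_{q-1})},\dots,1^{(s_1)}\big)$, let $\overline{\alpha}=(\overline{\alpha}_1,\dots,\overline{\alpha}_q)$ with $\overline{\alpha}_i=q-i+1+\sum_{k=i}^q s_k$, and let $\underline{\alpha}=\overline{\alpha}^*$. If $\alpha\neq\overline{\alpha}$, then $\alpha_i=\alpha_{i+1}$ for some $1\le i\le t$. Equivalently, if $\alpha\neq\underline{\alpha}$, then $\alpha_i-\alpha_{i+1}>1$ for some $1\le i\le t$ (with the convention $\alpha_{t+1}=0$).
   Context: A partition of a positive integer $n$ is a finite non-increasing sequence $\alpha=(\alpha_1,\dots,\alpha_t)$ of positive integers with sum $n$; $\mathcal{P}(n)$ is the set of partitions of $n$, and $\alpha_i=0$ for $i>t$. The diagonal sequence is $\delta(\alpha)=(d_k)_{k\ge1}$ with $d_k=|\{i:1\le i\le k,\ \alpha_i+i-1\ge k\}|$, trailing zeros omitted; every diagonal sequence has the stated form for some $q\ge1$ and integers $s_1,\dots,s_q\ge0$, where $j^{(s)}$ denotes $s$ consecutive entries equal to $j$. The conjugate $\beta^*$ of a partition $\beta$ has parts $\beta^*_j=|\{i:\beta_i\ge j\}|$. *)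

(* Defs.v *)
From mathcomp Require Import all_boot.
Set Implicit Arguments. Unset Strict Implicit. Unset Printing Implicit Defensive.

(* A partition of n: a finite non-increasing sequence of positive integers
   with sum n.  Parts are 1-indexed in the paper: alpha_i = nth 0 a (i-1),
   and alpha_i = 0 for i > t = size a. *)
Definition part (a : seq nat) (i : nat) : nat := nth 0 a i.-1.

Definition is_partition (n : nat) (a : seq nat) : Prop :=
  [/\ sorted geq a, all (fun x => 0 < x) a & sumn a = n].

Definition diag_entry (a : seq nat) (k : nat) : nat :=
  count (fun i => k <= part a i + i - 1) (iota 1 k).

(* trailing zeros omitted: d_k > 0 iff k <= max_i (alpha_i + i - 1) *)
Definition diag_len (a : seq nat) : nat :=
  \max_(i <- iota 1 (size a)) (part a i + i - 1).

Definition diag_seq (a : seq nat) : seq nat :=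
  [seq diag_entry a k | k <- iota 1 (diag_len a)].

Definition diag_form (q : nat) (s : nat -> nat) : seq nat :=
  iota 1 q ++ flatten [seq nseq (s j) j | j <- rev (iota 1 q)].

Definition alpha_bar (q : nat) (s : nat -> nat) : seq nat :=
  [seq q - i + 1 + \sum_(i <= k < q.+1) s k | i <- iota 1 q].

Definition conjugate (b : seq nat) : seq nat :=
  [seq count (fun x => j <= x) b | j <- iota 1 (head 0 b)].

(* Main.v *)
Require Import Defs.
From mathcomp Require Import all_boot zify.

Definition D (f : nat -> nat) (k : nat) :=
  count (fun i => k <= f i + i - 1) (iota 1 k).

Lemma iotaS1 L : iota 1 L.+1 = iota 1 L ++ [:: L.+1].
Proof. by have := iotaD 1 L 1; rewrite addn1 add1n. Qed.

Lemma count_interval i M L : 1 <= i ->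
  count (fun k => (i <= k) && (k <= M)) (iota 1 L) = minn L M - i.-1.
Proof.
move=> i1; elim: L => [|L IH]; first by rewrite min0n.
rewrite iotaS1 count_cat IH /= addn0.
case: (boolP ((i <= L.+1) && (L.+1 <= M))) => /= H; lia.
Qed.

Lemma count_iota_rev P k : count P (iota 1 k) = count (fun i => P (k.+1 - i)) (iota 1 k).
Proof.
rewrite -!sum1_count.
have -> : iota 1 k = index_iota 1 k.+1 by rewrite /index_iota subn1.
rewrite big_nat_rev; apply: eq_bigl => i /=.
by rewrite add1n subSS.
Qed.

Lemma DC (P : pred nat) K : (forall j j', 1 <= j' <= j -> j <= K -> P j -> P j') ->
  forall n, n <= K -> forall i, 1 <= i -> (i <= count P (iota 1 n)) = (i <= n) && P i.
Proof.
move=> HP; elim=> [|n IH] nK i i1.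
  by rewrite /=; lia.
rewrite iotaS1 count_cat /= addn0.
have IH' := IH (ltnW nK).
case Pn: (P n.+1) => /=.
  have allP : forall j, 1 <= j <= n.+1 -> P j.
    by move=> j hj; apply: (HP n.+1) => //.
  have cn : count P (iota 1 n) = n.
    case: n IH IH' nK HP allP Pn => [|n] IH IH' nK HP allP Pn; first by [].
    have := IH' n.+1 isT; rewrite leqnn allP ?leqnSn // => H.
    by have := count_size P (iota 1 n.+1); rewrite size_iota; lia.
  rewrite cn addn1; case: (leqP i n.+1) => h; last by [].
  by rewrite allP ?i1.
rewrite addn0 IH' //; case: (boolP (P i)) => Pi; last by rewrite !andbF.
rewrite !andbT; case: (ltngtP i n.+1) => h; try lia.
by rewrite h Pn in Pi.
Qed.

Section L1.
Variables (f : nat -> nat) (t L : nat).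
Hypothesis Hdec : forall i, 1 <= i -> i < t -> f i.+1 < f i.
Hypothesis Hpos : forall i, 1 <= i <= t -> 0 < f i.
Hypothesis Hzero : forall i, t < i -> f i = 0.

Lemma mono d j' : 1 <= j' -> j' + d <= t -> f (j' + d) + (j' + d) <= f j' + j'.
Proof.
move=> h1; elim: d => [|d IH] h2; first by rewrite addn0.
have := IH (ltac:(lia)).
have := Hdec (j' + d) ltac:(lia) ltac:(lia).
rewrite addnS; lia.
Qed.

Lemma Kchar k i : 1 <= i -> (i <= D f k) = (i <= k) && (k <= f i + i - 1).
Proof.
move=> i1; rewrite /D (@DC (fun j => k <= f j + j - 1) k) //.
move=> j j' /andP[h1 h2] hjk /= Pj.
case: (leqP j t) => hjt.
  have := mono (j - j') j' h1 ltac:(lia); rewrite subnKC //; lia.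
by rewrite Hzero // in Pj; lia.
Qed.

Lemma L1 : f 1 <= L ->
  forall i, 1 <= i -> count (fun x => i <= x) (map (D f) (iota 1 L)) = f i.
Proof.
move=> hL i i1; rewrite count_map.
rewrite (eq_in_count (a2 := fun k => (i <= k) && (k <= f i + i - 1))); last first.
  by move=> k _ /=; rewrite Kchar.
rewrite count_interval //.
case: (leqP i t) => hit; last by rewrite Hzero //; lia.
have := mono (i - 1) 1 (leqnn 1) ltac:(lia); rewrite subnKC //.
have := Hpos i ltac:(lia); lia.
Qed.
End L1.

Lemma sumlemma (s : nat -> nat) q i : 1 <= i ->
  sumn [seq (i <= j) * s j | j <- iota 1 q] = \sum_(i <= k < q.+1) s k.
Proof.
move=> i1; elim: q => [|q IH]; first by rewrite big_geq.
rewrite iotaS1 map_cat sumn_cat IH /= addn0.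
case: (leqP i q.+1) => h.
  by rewrite mul1n (big_nat_recr q.+1) //.
rewrite mul0n addn0 !big_geq //; lia.
Qed.

Lemma DF q s i : 1 <= i <= q.+1 ->
  count (fun x => i <= x) (diag_form q s) = q.+1 - i + \sum_(i <= k < q.+1) s k.
Proof.
move=> /andP[i1 iq]; rewrite /diag_form count_cat.
rewrite (eq_in_count (a2 := fun k => (i <= k) && (k <= q))); last first.
  by move=> k; rewrite mem_iota => /andP[_ h] /=; rewrite (_ : k <= q) ?andbT //; lia.
rewrite count_interval // count_flatten -map_comp.
rewrite (eq_map (g := fun j => (i <= j) * s j)); last first.
  by move=> j /=; rewrite count_nseq.
rewrite map_rev sumn_rev sumlemma // minnn; congr (_ + _); lia.
Qed.

Lemma tr_geq : transitive geq.
Proof. by move=> a b c /= h1 h2; lia. Qed.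

Lemma nth_sorted (a : seq nat) : sorted geq a -> forall k, nth 0 a k.+1 <= nth 0 a k.
Proof.
elim: a => [|x a IH] //= Ps [|k] /=.
  by case: a Ps {IH} => [|y a] //= /andP[].
by apply: IH; apply: path_sorted Ps.
Qed.

Lemma gkey (a : seq nat) : sorted geq a -> forall i j, 1 <= i -> 1 <= j ->
  (i <= count (fun x => j <= x) a) = (j <= part a i).
Proof.
elim: a => [|x a IH] Ps i j i1 j1.
  by rewrite /part /= nth_nil; lia.
have Pa : sorted geq a by apply: path_sorted Ps.
have allx : all (geq x) a by apply: order_path_min Ps; apply: tr_geq.
have c0 : j > x -> count (fun y => j <= y) a = 0.
  move=> jx; apply/eqP; rewrite -leqn0 leqNgt -has_count; apply/hasP => -[y ya /= jy].
  by have := allP allx y ya => /= yx; lia.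
case: i i1 => [|[|i]] // _.
  rewrite /part /=; case: (leqP j x) => h; first by lia.
  by rewrite c0 //; lia.
rewrite /= -(IH Pa i.+1 j) //.
case: (leqP j x) => h; first by rewrite add1n.
by rewrite c0 //; lia.
Qed.

Lemma common f t L q s :
  (forall i, 1 <= i -> i < t -> f i.+1 < f i) ->
  (forall i, 1 <= i <= t -> 0 < f i) ->
  (forall i, t < i -> f i = 0) ->
  f 1 <= L -> 1 <= q -> map (D f) (iota 1 L) = diag_form q s ->
  t = q /\ alpha_bar q s = map f (iota 1 q).
Proof.
move=> Hd Hp Hz hL q1 E.
have key : forall i, 1 <= i <= q.+1 -> f i = q.+1 - i + \sum_(i <= k < q.+1) s k.
  move=> i hi; rewrite -(@L1 f t L Hd Hp Hz hL i) ?E ?DF //; lia.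
split.
  have h1 := key q.+1 ltac:(lia); rewrite big_geq // subnn in h1.
  have h2 := key q ltac:(lia); rewrite big_nat_recr // in h2.
  case: (ltngtP t q) => // c.
    by rewrite Hz // in h2; lia.
  by have := Hp q.+1 ltac:(lia); rewrite h1.
rewrite /alpha_bar; apply/eq_in_map => i; rewrite mem_iota => hi.
rewrite key; [congr (_ + _) |]; lia.
Qed.

Lemma seq_part a : map (part a) (iota 1 (size a)) = a.
Proof.
rewrite -{3}(mkseq_nth 0 a) /mkseq (iotaDl 1 0) -map_comp.
by apply: eq_map => i; rewrite /part /=.
Qed.

Lemma diag_len_ge a i : 1 <= i <= size a -> part a i + i - 1 <= diag_len a.
Proof.
move=> hi; rewrite /diag_len.
apply: (leq_bigmax_seq (F := fun i => part a i + i - 1)) => //.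
by rewrite mem_iota; lia.
Qed.

Theorem corollary2p7 (n : nat) (alpha : seq nat) (q : nat) (s : nat -> nat) :
  is_partition n alpha -> 1 <= q ->
  diag_seq alpha = diag_form q s ->
  (alpha <> alpha_bar q s ->
     exists2 i, 1 <= i <= size alpha & part alpha i = part alpha i.+1) /\
  (alpha <> conjugate (alpha_bar q s) ->
     exists2 i, 1 <= i <= size alpha & 1 < part alpha i - part alpha i.+1).
Proof.
move=> [Ps Hall _] q1 E.
have E' : map (D (part alpha)) (iota 1 (diag_len alpha)) = diag_form q s by [].
have Hz : forall i, size alpha < i -> part alpha i = 0.
  by move=> i hi; rewrite /part nth_default //; lia.
have Hp : forall i, 1 <= i <= size alpha -> 0 < part alpha i.
  move=> i hi; apply: (allP Hall); rewrite /part; apply: mem_nth; case: i hi => // i; rewrite succnK; lia.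
have Hs : forall i, 1 <= i -> part alpha i.+1 <= part alpha i.
  move=> i hi; rewrite /part /=; case: i hi => // i _; exact: nth_sorted.
split.
  move=> Hne.
  case Hh: (has (fun i => part alpha i == part alpha i.+1) (iota 1 (size alpha))).
    move/hasP: Hh => [i]; rewrite mem_iota => hi /eqP e; exists i => //; lia.
  have Hn : forall i, 1 <= i <= size alpha -> part alpha i != part alpha i.+1.
    move=> i hi; apply/negP => e; move/negP: Hh; apply; apply/hasP; exists i => //.
    by rewrite mem_iota; lia.
  exfalso; apply: Hne.
  have Hd : forall i, 1 <= i -> i < size alpha -> part alpha i.+1 < part alpha i.
    move=> i i1 it; have := Hs i i1; have := Hn i ltac:(lia); move/eqP; lia.
  have hL : part alpha 1 <= diag_len alpha.
    case: (posnP (size alpha)) => hs; first by rewrite Hz ?hs.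
    by have := @diag_len_ge alpha 1 ltac:(lia); rewrite addnK.
  have [tq ->] := common _ _ _ _ _ Hd Hp Hz hL q1 E'.
  by rewrite -tq seq_part.
move=> Hne.
case Hh: (has (fun i => 1 < part alpha i - part alpha i.+1) (iota 1 (size alpha))).
  move/hasP: Hh => [i]; rewrite mem_iota => hi e; exists i => //; lia.
have Hn : forall i, 1 <= i <= size alpha -> part alpha i - part alpha i.+1 <= 1.
  move=> i hi; rewrite leqNgt; apply/negP => e; move/negP: Hh; apply; apply/hasP; exists i => //.
  by rewrite mem_iota; lia.
exfalso; apply: Hne.
pose g j := count (fun x => j <= x) alpha.
have gk : forall i j, 1 <= i -> 1 <= j -> (i <= g j) = (j <= part alpha i).
  by move=> i j i1 j1; apply: gkey.
have ED : forall k, D (part alpha) k = D g k.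
  move=> k; rewrite /D [RHS]count_iota_rev; apply: eq_in_count => i; rewrite mem_iota => hi /=.
  have -> : (k <= g (k.+1 - i) + (k.+1 - i) - 1) = (i <= g (k.+1 - i)).
    by apply/idP/idP; lia.
  rewrite gk; try lia; by apply/idP/idP; lia.
have gsz : g 1 = size alpha.
  rewrite /g -[RHS](count_predT alpha); apply: eq_in_count => x xa /=.
  by have := allP Hall x xa.
have Hd : forall j, 1 <= j -> j < part alpha 1 -> g j.+1 < g j.
  move=> j j1 jt; set m := g j.+1; rewrite (gk m.+1 j) //.
  have mle : m <= size alpha by apply: count_size.
  case: (posnP m) => m0; first by rewrite m0; lia.
  have a1 : j.+1 <= part alpha m by rewrite -gk //; lia.
  have a2 : part alpha m.+1 < j.+1 by rewrite ltnNge -gk //; rewrite -/m; lia.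
  have := Hn m ltac:(lia); lia.
have Hpg : forall j, 1 <= j <= part alpha 1 -> 0 < g j.
  by move=> j hj; rewrite gk //; lia.
have Hzg : forall j, part alpha 1 < j -> g j = 0.
  move=> j hj; apply/eqP; rewrite -leqn0 leqNgt gk //; lia.
have hL : g 1 <= diag_len alpha.
  rewrite gsz; case: (posnP (size alpha)) => hs; first by rewrite hs.
  have := @diag_len_ge alpha (size alpha) ltac:(lia).
  have := Hp (size alpha) ltac:(lia); lia.
have E2 : map (D g) (iota 1 (diag_len alpha)) = diag_form q s.
  by rewrite -E'; apply: eq_map => k; rewrite ED.
have [tq ->] := common _ _ _ _ _ Hd Hpg Hzg hL q1 E2.
rewrite /conjugate.
have -> : head 0 (map g (iota 1 q)) = size alpha.
  by case: q q1 {tq E E' E2} => // q _; rewrite -gsz.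
rewrite -[LHS]seq_part; apply/eq_in_map => j; rewrite mem_iota => hj.
rewrite count_map (eq_in_count (a2 := fun i => (1 <= i) && (i <= part alpha j))); last first.
  by move=> i; rewrite mem_iota => hi /=; rewrite gk; lia.
rewrite count_interval // subn0.
have : part alpha j <= part alpha 1.
  have := gk j (part alpha j) ltac:(lia) (Hp j ltac:(lia)); rewrite leqnn => /esym hj'.
  have hj2 : j <= g (part alpha j) by rewrite -hj'.
  rewrite -gk //; [lia | exact: Hp j ltac:(lia)].
lia.
Qed.
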